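(* Suppose $\mathbb{P}$ satisfies the margin condition for some $\kappa>0$, $\alpha>0$, that $\|\mu_a\|_\infty,\|\widehat\mu_a\|_\infty\le B<\infty$ a.s. for all $a$, and that $\max_a\|\widehat\mu_a-\mu_a\|_\infty=o_{\mathbb{P}}(1)$, where $\widehat\mu$ is constructed from a separate sample independent of $Z_1,\dots,Z_n$. Let $C^*\in\mathcal{C}_k^*$ and $\widehat R_n(C)=\frac1n\sum_{i=1}^n\|\widehat\mu(X_i)-\Pi_C(\widehat\mu(X_i))\|_2^2$. Then $$\widehat R_n(C^* )-R(C^* )=O_{\mathbb{P}}\Big(\frac1{\sqrt n}+\max_a\|\widehat\mu_a-\mu_a\|_{\mathbb{P},1}+\max_a\|\widehat\mu_a-\mu_a\|_\infty^{\alpha+1}+\frac1\kappa\max_a\big(\|\widehat\mu_a-\mu_a\|_\infty\|\widehat\mu_a-\mu_a\|_{\mathbb{P},1}\big)\Big).$$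
   Context: Data: i.i.d. $Z_1,\dots,Z_n$ copies of $Z=(Y,A,X)\sim\mathbb{P}$, $A\in\mathcal{A}=\{1,\dots,p\}$, $X\in\mathbb{R}^d$. $\mu_a(X)=\mathbb{E}(Y\mid X,A=a)$, $\mu=(\mu_1(X),\dots,\mu_p(X))^\top$. Codebooks $C=\{c_1,\dots,c_k\}\subset\mathbb{R}^p$; $\mathcal{C}_k$ those of size $k$ in the image of $\mu$; $\Pi_C(x)=\arg\min_{c\in C}\|c-x\|_2^2$; $R(C)=\mathbb{E}\|\mu-\Pi_C(\mu)\|_2^2$; $\mathcal{C}_k^*$ its minimizers. $V_j(C^* )=\{x:\|x-c_j^*\|_2\le\|x-c_i^*\|_2\ \forall i\ne j\}$; $N_{C^*}(t)=\bigcup_j\{x\in V_j(C^* ):|\,\|x-c_j^*\|_2-\min_{i\ne j}\|x-c_i^*\|_2\,|\le t\}$; margin condition (radius $\kappa$, rate $\alpha$): for $0\le t\le\kappa$, $\sup_{C^*\in\mathcal{C}_k^*}\mathbb{P}(\mu\in N_{C^*}(t))\lesssim t^\alpha$. $\|f\|_{\mathbb{P},1}=\int|f|d\mathbb{P}$ with $\widehat\mu$ held fixed, $\|\cdot\|_\infty$ sup norm. *)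

(* Defs.v *)
From HB Require Import structures.
From mathcomp Require Import all_boot all_order all_algebra.
From mathcomp Require Import finmap.
From mathcomp Require Import all_classical all_reals all_analysis.
Set Implicit Arguments. Unset Strict Implicit. Unset Printing Implicit Defensive.
Import Order.TTheory GRing.Theory Num.Theory.
Local Open Scope classical_set_scope.

Local Open Scope ring_scope.

Section Defs.
Variable R : realType.

Definition sqn (p : nat) (v : 'rV[R]_p) : R := \sum_(a < p) (v 0 a) ^+ 2.
Definition norm2 (p : nat) (v : 'rV[R]_p) : R := Num.sqrt (sqn v).

Definition proj_codebook (p : nat) (C : {fset 'rV[R]_p}) (x : 'rV[R]_p) : 'rV[R]_p :=
  xget 0 [set c | c \in C /\ forall c', c' \in C -> sqn (x - c) <= sqn (x - c')].

Context (dT : measure_display) (T : measurableType dT).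

Definition codebook (p : nat) (mu : T -> 'rV[R]_p) (k : nat)
  (C : {fset 'rV[R]_p}) : Prop :=
  (#|` C|)%fset = k /\ (forall c, c \in C -> exists x, mu x = c).

Definition risk (PX : probability T R) (p : nat) (mu : T -> 'rV[R]_p)
  (C : {fset 'rV[R]_p}) : R :=
  fine (\int[PX]_x (sqn (mu x - proj_codebook C (mu x)))%:E).

Definition optimal (PX : probability T R) (p : nat) (mu : T -> 'rV[R]_p)
  (k : nat) (C : {fset 'rV[R]_p}) : Prop :=
  codebook mu k C /\ forall C', codebook mu k C' -> risk PX mu C <= risk PX mu C'.

Definition voronoi (p : nat) (C : {fset 'rV[R]_p}) (c : 'rV[R]_p) : set 'rV[R]_p :=
  [set x | forall c', c' \in C -> c' != c -> norm2 (x - c) <= norm2 (x - c')].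

(** N_C(t); the min over the (possibly empty) set of other codewords is an
    extended-real infimum (+oo when empty) *)
Definition margin_nbhd (p : nat) (C : {fset 'rV[R]_p}) (t : R) : set 'rV[R]_p :=
  [set x | exists c, c \in C /\ voronoi C c x /\
    (`| (norm2 (x - c))%:E -
        ereal_inf [set (norm2 (x - c'))%:E | c' in [set c' | c' \in C /\ c' != c]]
     | <= t%:E)%E].

Definition margin_condition (PX : probability T R) (p : nat) (mu : T -> 'rV[R]_p)
  (k : nat) (kappa alpha : R) : Prop :=
  exists c0 : R, 0 < c0 /\
    forall t, 0 <= t <= kappa -> forall C, optimal PX mu k C ->
      (PX (mu @^-1` margin_nbhd C t) <= (c0 * t `^ alpha)%:E)%E.

Definition supnorm (f : T -> R) : R := sup [set `|f x| | x in [set: T]].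
Definition L1norm (PX : probability T R) (f : T -> R) : R :=
  fine (\int[PX]_x (`|f x|)%:E).

Context (dO : measure_display) (Omega : measurableType dO).

(** an event "holds with (inner) probability at least 1 - eps" *)
Definition whp (P : probability Omega R) (eps : R) (E : set Omega) : Prop :=
  exists A, measurable A /\ (P A >= (1 - eps)%:E)%E /\ A `<=` E.

Definition bigO_in_prob (P : probability Omega R) (W V : nat -> Omega -> R) : Prop :=
  forall eps, 0 < eps -> exists M, 0 < M /\ exists N, forall n, (N <= n)%N ->
    whp P eps [set w | `|W n w| <= M * V n w].

Definition littleoP1 (P : probability Omega R) (W : nat -> Omega -> R) : Prop :=
  forall eps delta, 0 < eps -> 0 < delta -> exists N, forall n, (N <= n)%N ->
    whp P eps [set w | `|W n w| <= delta].

Context (dS : measure_display) (S : measurableType dS).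

(** D (the auxiliary sample from which muhat is built) and X_0, ..., X_{n-1}
    are mutually independent, and each X_i has law PX *)
Definition indep_sample (P : probability Omega R) (PX : probability T R)
  (D : Omega -> S) (X : nat -> Omega -> T) (n : nat) : Prop :=
  forall (B : set S) (A : nat -> set T), measurable B ->
    (forall i, measurable (A i)) ->
    P (D @^-1` B `&` \bigcap_(i in `I_n) (X i @^-1` A i)) =
    (P (D @^-1` B) * \prod_(i < n) PX (A i))%E.

End Defs.

(* Main.v *)
Require Import Defs.
From HB Require Import structures.
From mathcomp Require Import all_boot all_order all_algebra.
From mathcomp Require Import finmap.
From mathcomp Require Import all_classical all_reals all_analysis.
From mathcomp Require Import ring lra.
From mathcomp Require Import measurable_realfun.
Set Implicit Arguments. Unset Strict Implicit. Unset Printing Implicit Defensive.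
Import Order.TTheory GRing.Theory Num.Theory.
Local Open Scope classical_set_scope.
Local Open Scope ring_scope.
Section Proj.
Variable R : realType.

Lemma bigmin_le_seq (V : eqType) (s : seq V) (f : V -> R) x0 :
  \big[Num.min/x0]_(c <- s) f c <= x0 /\
  (forall c, c \in s -> \big[Num.min/x0]_(c <- s) f c <= f c).
Proof.
elim: s => [|a s [IH1 IH2]]; first by rewrite big_nil; split => //.
rewrite big_cons; split; first by rewrite ge_min IH1 orbT.
move=> c; rewrite inE => /orP[/eqP->|cs]; first by rewrite ge_min lexx.
by rewrite ge_min IH2 ?orbT.
Qed.

Lemma minl {x y : R} : x <= y -> Num.min x y = x.
Proof. exact: min_idPl. Qed.
Lemma minr {x y : R} : y <= x -> Num.min x y = y.
Proof. exact: min_idPr. Qed.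

Lemma bigmin_att (V : eqType) (s : seq V) (f : V -> R) x0 :
  \big[Num.min/x0]_(c <- s) f c = x0 \/
  exists c, c \in s /\ \big[Num.min/x0]_(c <- s) f c = f c.
Proof.
elim: s => [|a s IH]; first by rewrite big_nil; left.
have Em : \big[Num.min/x0]_(c <- a :: s) f c = Num.min (f a) (\big[Num.min/x0]_(c <- s) f c).
  by rewrite big_cons.
rewrite Em.
have [h|h] := leP (f a) (\big[Num.min/x0]_(c <- s) f c).
  by right; exists a; split; [rewrite mem_head|].
case: IH => [E|[c [cs E]]]; first by left.
by right; exists c; split; [rewrite inE cs orbT|].
Qed.

Variable p : nat.
Implicit Types (C : {fset 'rV[R]_p}) (u v c : 'rV[R]_p).

Definition c0of C : 'rV[R]_p := xget 0 [set c | c \in C].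

Definition dmin C u : R :=
  \big[Num.min/sqn (u - c0of C)]_(c <- enum_fset C) sqn (u - c).

Lemma c0of_in C : (exists c, c \in C) -> c0of C \in C.
Proof. move=> [c1 c1C]; rewrite /c0of; case: xgetP => // /(_ c1) /=; by []. Qed.

Lemma proj_spec C u : (exists c, c \in C) ->
  proj_codebook C u \in C /\
  forall c, c \in C -> sqn (u - proj_codebook C u) <= sqn (u - c).
Proof.
move=> hC; have c0C := @c0of_in C hC.
have [h1 h2] := @bigmin_le_seq _ (enum_fset C) (fun c => sqn (u - c)) (sqn (u - c0of C)).
have ex : exists c, c \in C /\ forall c', c' \in C -> sqn (u - c) <= sqn (u - c').
  case: (@bigmin_att _ (enum_fset C) (fun c => sqn (u - c)) (sqn (u - c0of C))) => [E|[c [cs E]]].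
    by exists (c0of C); split => // c' c'C; rewrite -E; apply: h2.
  by exists c; split => // c' c'C; rewrite -E; apply: h2.
rewrite /proj_codebook; case: xgetP => [y -> [] //|].
by case: ex => c [cC hc] /(_ c) /=; case; split.
Qed.

Lemma proj_empty C u : ~ (exists c, c \in C) -> proj_codebook C u = 0.
Proof.
move=> hC; rewrite /proj_codebook; case: xgetP => // y _ [yC _].
by exfalso; apply: hC; exists y.
Qed.

Lemma dminE C u : sqn (u - proj_codebook C u) = dmin C u.
Proof.
have [hC|hC] := pselect (exists c, c \in C); last first.
  rewrite proj_empty // /dmin.
  have -> : enum_fset C = [::].
    case E: (enum_fset C) => [//|a s]; exfalso; apply: hC; exists a.
    by have : a \in enum_fset C by rewrite E mem_head.
  rewrite big_nil /c0of; congr sqn; congr (_ - _).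
  by case: xgetP => // y _ yC; exfalso; apply: hC; exists y.
have [pC pmin] := @proj_spec C u hC.
have [h1 h2] := @bigmin_le_seq _ (enum_fset C) (fun c => sqn (u - c)) (sqn (u - c0of C)).
rewrite /dmin; apply/eqP; rewrite eq_le; apply/andP; split.
  case: (@bigmin_att _ (enum_fset C) (fun c => sqn (u - c)) (sqn (u - c0of C))) => [->|[c [cs ->]]].
    by apply: pmin; apply: c0of_in.
  by apply: pmin.
by apply: h2.
Qed.


Lemma sqn_ge0 u : 0 <= sqn u.
Proof. by apply: sumr_ge0 => a _; exact: sqr_ge0. Qed.

Lemma sqn_diff u v c (B : R) :
  (forall a, `|u 0 a| <= B) -> (forall a, `|v 0 a| <= B) -> (forall a, `|c 0 a| <= B) ->
  `|sqn (u - c) - sqn (v - c)| <= 4 * B * \sum_(a < p) `|u 0 a - v 0 a|.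
Proof.
move=> hu hv hc; rewrite /sqn -sumrB mulr_sumr.
apply: le_trans (ler_norm_sum _ _ _) _; apply: ler_sum => a _.
rewrite !mxE.
have -> : (u 0 a - c 0 a) ^+ 2 - (v 0 a - c 0 a) ^+ 2 =
   (u 0 a - v 0 a) * (u 0 a + v 0 a - 2 * c 0 a) by ring.
rewrite normrM mulrC ler_wpM2r //.
apply: le_trans (ler_normB _ _) _.
apply: le_trans (lerD (ler_normD _ _) (lexx _)) _.
rewrite normrM ger0_norm //.
have := hu a; have := hv a; have := hc a; lra.
Qed.

Lemma proj_lip C u v (B : R) :
  (forall c, c \in C -> forall a, `|c 0 a| <= B) ->
  (forall a, `|u 0 a| <= B) -> (forall a, `|v 0 a| <= B) ->
  `|sqn (u - proj_codebook C u) - sqn (v - proj_codebook C v)|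
     <= 4 * B * \sum_(a < p) `|u 0 a - v 0 a|.
Proof.
move=> hC hu hv.
have [ne|ne] := pselect (exists c, c \in C); last first.
  rewrite !proj_empty //; apply: sqn_diff => // a; rewrite mxE normr0.
  exact: le_trans (normr_ge0 _) (hu a).
have [pu mu] := @proj_spec C u ne; have [pv mv] := @proj_spec C v ne.
have L1 := @sqn_diff u v _ B hu hv (hC _ pv).
have L2 := @sqn_diff v u _ B hv hu (hC _ pu).
have E : \sum_(a < p) `|v 0 a - u 0 a| = \sum_(a < p) `|u 0 a - v 0 a|.
  by apply: eq_bigr => a _; rewrite distrC.
rewrite E in L2.
have m1 := mu _ pv; have m2 := mv _ pu.
move: L1 L2; set S := 4 * B * _.
set a1 := sqn (u - proj_codebook C u); set a2 := sqn (v - proj_codebook C v).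
set b1 := sqn (u - proj_codebook C v); set b2 := sqn (v - proj_codebook C u).
rewrite -/a1 -/a2 -/b1 -/b2 in m1 m2 *.
move=> L1 L2; rewrite ler_norml; apply/andP; split.
  move: L2; rewrite ler_norml => /andP[h1 h2]; lra.
move: L1; rewrite ler_norml => /andP[h1 h2]; lra.
Qed.

Lemma proj_bound C u (B : R) :
  (forall c, c \in C -> forall a, `|c 0 a| <= B) ->
  (forall a, `|u 0 a| <= B) ->
  sqn (u - proj_codebook C u) <= 4 * B ^+ 2 * p%:R.
Proof.
move=> hC hu.
have hc : forall a, `|proj_codebook C u 0 a| <= B.
  have [ne|ne] := pselect (exists c, c \in C).
    by have [pu _] := @proj_spec C u ne; exact: hC.
  by rewrite proj_empty // => a; rewrite mxE normr0; exact: le_trans (normr_ge0 _) (hu a).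
apply: (@le_trans _ _ (\sum_(a < p) 4 * B ^+ 2)); last first.
  by rewrite sumr_const card_ord mulr_natr.
apply: ler_sum => a _; rewrite !mxE.
have h1 := hu a; have h2 := hc a.
have : `|u 0 a - proj_codebook C u 0 a| <= 2 * B.
  apply: le_trans (ler_normB _ _) _; lra.
move=> h3; rewrite -real_normK ?num_real //.
have h4 : 0 <= `|u 0 a - proj_codebook C u 0 a| by [].
have : `|u 0 a - proj_codebook C u 0 a| ^+ 2 <= (2 * B) ^+ 2.
  by rewrite ler_sqr ?nnegrE //; lra.
by rewrite exprMn; lra.
Qed.

End Proj.
Section Meas.
Variable R : realType.
Variable p : nat.
Context (dZ : measure_display) (Z : measurableType dZ).

Lemma meas_sqn (g : Z -> 'rV[R]_p) (c : 'rV[R]_p) :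
  (forall a, measurable_fun setT (fun z => g z 0 a)) ->
  measurable_fun setT (fun z => sqn (g z - c)).
Proof.
move=> mg; rewrite /sqn.
have -> : (fun z => \sum_(a < p) (g z - c) 0 a ^+ 2) =
          (fun z => \sum_(a <- index_enum 'I_p) (g z 0 a - c 0 a) ^+ 2).
  by apply/funext => z; rewrite [LHS]big_mkcond /=; apply: eq_bigr => a _; rewrite !mxE.
apply: measurable_sum => a.
apply: (measurableT_comp (exprn_measurable _)).
exact: measurable_funB (mg a) (measurable_cst _).
Qed.

Lemma meas_dmin (g : Z -> 'rV[R]_p) (C : {fset 'rV[R]_p}) :
  (forall a, measurable_fun setT (fun z => g z 0 a)) ->
  measurable_fun setT (fun z => dmin C (g z)).
Proof.
move=> mg; rewrite /dmin; elim: (enum_fset C) => [|c s IH].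
  by under eq_fun do rewrite big_nil; exact: meas_sqn.
under eq_fun do rewrite big_cons.
have -> : (fun z => Num.min (sqn (g z - c)) (\big[Num.min/sqn (g z - c0of C)]_(j <- s) sqn (g z - j)))
  = (fun z => sqn (g z - c)) \min (fun z => \big[Num.min/sqn (g z - c0of C)]_(j <- s) sqn (g z - j)).
  by [].
exact: measurable_minr (meas_sqn c mg) IH.
Qed.

End Meas.
Section pf.
Local Open Scope ereal_scope.
Context d d' (T1 : measurableType d) (T2 : measurableType d') (R : realType).
Variables (m : {measure set T1 -> \bar R}) (f : T1 -> T2) (mf : measurable_fun setT f).

Definition pf (_ : measurable_fun setT f) : set T2 -> \bar R := pushforward m f.

Let pf0 : pf mf set0 = 0.
Proof. by rewrite /pf /pushforward preimage_set0 measure0. Qed.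

Let pf_ge0 A : 0 <= pf mf A.
Proof. exact: measure_ge0. Qed.

Let pf_sigma_additive : semi_sigma_additive (pf mf).
Proof.
move=> F mF tF mUF; rewrite /pf /pushforward preimage_bigcup.
apply: measure_semi_sigma_additive.
- by move=> n; rewrite -[X in measurable X]setTI; exact: mf.
- apply/trivIsetP => /= i j _ _ ij; rewrite -preimage_setI.
  by move/trivIsetP : tF => /(_ _ _ _ _ ij) ->//; rewrite preimage_set0.
- by rewrite -preimage_bigcup -[X in measurable X]setTI; exact: mf.
Qed.

HB.instance Definition _ := isMeasure.Build _ _ _
  (pf mf) pf0 pf_ge0 pf_sigma_additive.

End pf.

Section pfP.
Local Open Scope ereal_scope.
Context d d' (T1 : measurableType d) (T2 : measurableType d') (R : realType).
Variables (P : probability T1 R) (f : T1 -> T2) (mf : measurable_fun setT f).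

Let pf_setT : pf P mf setT = 1.
Proof. rewrite /pf /pushforward preimage_setT; exact: probability_setT. Qed.

HB.instance Definition _ := Measure_isProbability.Build _ _ _ (pf P mf) pf_setT.
End pfP.

Section law.
Local Open Scope ereal_scope.
Context (R : realType) (dO : measure_display) (Omega : measurableType dO)
  (dT : measure_display) (T : measurableType dT)
  (dS : measure_display) (S : measurableType dS).
Variables (P : probability Omega R) (PX : probability T R).
Variables (D : Omega -> S) (Xi Xj : Omega -> T).
Hypotheses (mD : measurable_fun setT D) (mXi : measurable_fun setT Xi)
  (mXj : measurable_fun setT Xj).
Hypothesis IND : forall A B C, measurable A -> measurable B -> measurable C ->
  P (D @^-1` A `&` Xi @^-1` B `&` Xj @^-1` C) = P (D @^-1` A) * PX B * PX C.

Definition Psi w := (D w, Xi w).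
Definition Phi w := (Psi w, Xj w).
Lemma mPsi : measurable_fun setT Psi.
Proof. exact: measurable_fun_pair. Qed.
Lemma mPhi : measurable_fun setT Phi.
Proof. exact: measurable_fun_pair mPsi mXj. Qed.

Local Notation PD := (pf P mD).
Local Notation mu1 := (PD \x PX).

Lemma law_inner (C : set T) (mC : measurable C) (E : set (S * T)) :
  measurable E -> P (Psi @^-1` E `&` Xj @^-1` C) = PX C * mu1 E.
Proof.
have mXjC : measurable (Xj @^-1` C) by rewrite -[X in measurable X]setTI; exact: mXj.
pose nu := pf (mrestr P mXjC) mPsi.
have PXC0 : (0 <= fine (PX C))%R by apply: fine_ge0.
pose r : {nonneg R} := NngNum PXC0.
pose lam := mscale r mu1.
have finC : PX C = (fine (PX C))%:E.
  by rewrite fineK // fin_num_measure.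
move=> mE.
have -> : P (Psi @^-1` E `&` Xj @^-1` C) = nu E by [].
have -> : PX C * mu1 E = lam E by rewrite /lam /mscale /= -finC.
pose G : set (set (S * T)) :=
  [set C | exists A, measurable A /\ exists B, measurable B /\ C = A `*` B].
apply: (measure_unique G (fun=> setT)) => //.
- rewrite measurable_prod_measurableType //; congr (<<s _ >>).
  rewrite predeqE; split => [[A mA [B mB <-]]|[A [mA [B [mB ->]]]]].
    by exists A; split => //; exists B.
  by exists A => //; exists B.
- move=> /= _ _ [X1 [mX1 [X2 [mX2 ->]]]] [Y1 [mY1 [Y2 [mY2 ->]]]].
  rewrite -setXI; exists (X1 `&` Y1); split; first exact: measurableI.
  by exists (X2 `&` Y2); split => //; exact: measurableI.
- by move=> _; exists setT; split => //; exists setT; split => //; rewrite setXTT.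
- by rewrite bigcup_const.
- move=> _ [A [mA [B [mB ->]]]].
  rewrite /nu /lam /mscale /= /pf /pushforward /mrestr /=.
  transitivity ((r%:num)%:E * mu1 (A `*` B)); last by [].
  rewrite product_measure1E // /pf /pushforward.
  have -> : Psi @^-1` (A `*` B) `&` Xj @^-1` C = D @^-1` A `&` Xi @^-1` B `&` Xj @^-1` C.
    by apply/seteqP; split => w /= [[? ?] ?].
  by rewrite IND // -finC [RHS]muleC.
- move=> _; rewrite /nu /= /pf /pushforward /mrestr.
  apply: (le_lt_trans (probability_le1 _ _)); last exact: ltey.
  by apply: measurableI => //; rewrite -[X in measurable X]setTI; exact: mPsi.
Qed.

Lemma law3 (E : set ((S * T) * T)) : measurable E ->
  P (Phi @^-1` E) = (mu1 \x PX) E.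
Proof.
move=> mE; symmetry.
apply: (@product_measure_unique _ _ _ _ R (mu1 : probability _ R) PX (pf P mPhi)) => // E1 C mE1 mC.
transitivity (P (Psi @^-1` E1 `&` Xj @^-1` C)); first by [].
by rewrite law_inner // muleC.
Qed.

End law.
Section bndint.
Local Open Scope ereal_scope.
Context d (T : measurableType d) (R : realType).

Lemma bnd_near (f : T -> R) (K : R) (A : set T) :
  (forall x, (`|f x| <= K)%R) -> [bounded f x | x in A].
Proof.
move=> hf; exists K; split; first exact: num_real.
by move=> M hM x _; apply: le_trans (hf x) (ltW hM).
Qed.

Lemma bnd_int (mu : {measure set T -> \bar R}) (f : T -> R) (K : R) :
  mu setT < +oo -> measurable_fun setT f -> (forall x, (`|f x| <= K)%R) ->
  mu.-integrable setT (EFin \o f).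
Proof.
move=> hmu mf hf; apply: measurable_bounded_integrable => //.
exact: bnd_near hf.
Qed.

Lemma prob_fin (P : probability T R) : P setT < +oo.
Proof. by rewrite probability_setT ltey. Qed.

Lemma prob1 (Q : probability T R) : (Q : {measure set T -> \bar R}) setT = 1.
Proof. exact: probability_setT. Qed.

End bndint.

Section cross.
Local Open Scope ereal_scope.
Context (R : realType) (dO : measure_display) (Omega : measurableType dO)
  (dT : measure_display) (T : measurableType dT)
  (dS : measure_display) (S : measurableType dS).
Variables (P : probability Omega R) (PX : probability T R).
Variables (D : Omega -> S) (Xi Xj : Omega -> T).
Hypotheses (mD : measurable_fun setT D) (mXi : measurable_fun setT Xi)
  (mXj : measurable_fun setT Xj).
Hypothesis IND : forall A B C, measurable A -> measurable B -> measurable C ->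
  P (D @^-1` A `&` Xi @^-1` B `&` Xj @^-1` C) = P (D @^-1` A) * PX B * PX C.
Variables (H : S * T -> R) (K : R).
Hypotheses (mH : measurable_fun setT H) (hK : forall z, (`|H z| <= K)%R)
  (h0 : forall s, \int[PX]_y (H (s, y))%:E = 0).

Let phi (z : (S * T) * T) : R := (H z.1 * H (z.1.1, z.2))%R.

Let mphi : measurable_fun setT phi.
Proof.
apply: measurable_funM; first exact: measurableT_comp mH measurable_fst.
apply: measurableT_comp mH _; apply: measurable_fun_pair.
  exact: measurableT_comp measurable_fst measurable_fst.
exact: measurable_snd.
Qed.

Let bphi z : (`|phi z| <= K * K)%R.
Proof.
rewrite /phi normrM; apply: ler_pM => //; exact: hK.
Qed.

Lemma cross0 : \int[P]_w (H (D w, Xi w) * H (D w, Xj w))%:E = 0.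
Proof.
have mP := mPhi mD mXi mXj.
have -> : (fun w => (H (D w, Xi w) * H (D w, Xj w))%:E) = (EFin \o phi) \o Phi D Xi Xj.
  by [].
have iP : P.-integrable (Phi D Xi Xj @^-1` setT) ((EFin \o phi) \o Phi D Xi Xj).
  rewrite preimage_setT; apply: (bnd_int (K := K * K));
    [exact: prob_fin|exact: measurableT_comp mphi mP|move=> w; exact: bphi].
have mf : measurable_fun setT (EFin \o phi) by exact/measurable_EFinP.
have := integral_pushforward mP mf iP measurableT.
rewrite preimage_setT => <-.
rewrite (eq_measure_integral ((pf P mD \x PX) \x PX)); last first.
  move=> A mA _; have := (law3 mD mXi mXj IND mA); move=> h; exact h.
have i12 : ((pf P mD \x PX : probability _ R) \x PX).-integrable setT (EFin \o phi).
  apply: (bnd_int (K := K * K)); [exact: prob_fin|exact: mphi|move=> z; exact: bphi].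
rewrite -(integral12_prod_meas1 i12).
apply: integral0_eq => z _.
rewrite /fubini_F /=.
have -> : (fun y => (phi (z, y))%:E) = (fun y => (H z)%:E * (H (z.1, y))%:E).
  by apply/funext => y.
rewrite integralZl //; first by rewrite h0 mule0.
apply: (bnd_int (K := K)); [exact: prob_fin| |move=> y; exact: hK].
by apply: measurableT_comp mH _; apply: measurable_fun_pair => //.
Qed.

End cross.
Section var.
Local Open Scope ereal_scope.
Context (R : realType) (dO : measure_display) (Omega : measurableType dO)
  (dT : measure_display) (T : measurableType dT)
  (dS : measure_display) (S : measurableType dS).
Variables (P : probability Omega R) (PX : probability T R).
Variables (D : Omega -> S) (X : nat -> Omega -> T) (n : nat).
Hypotheses (mD : measurable_fun setT D) (mX : forall i, measurable_fun setT (X i)).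
Hypothesis IND2 : forall i j, (i < n)%N -> (j < n)%N -> i <> j ->
  forall A B C, measurable A -> measurable B -> measurable C ->
  P (D @^-1` A `&` X i @^-1` B `&` X j @^-1` C) = P (D @^-1` A) * PX B * PX C.
Variables (H : S * T -> R) (K : R).
Hypotheses (mH : measurable_fun setT H) (hK : forall z, (`|H z| <= K)%R)
  (h0 : forall s, \int[PX]_y (H (s, y))%:E = 0).

Let Hi (i : nat) (w : Omega) : R := H (D w, X i w).

Let mHi i : measurable_fun setT (Hi i).
Proof. by apply: measurableT_comp mH _; apply: measurable_fun_pair. Qed.

Let iHij i j : P.-integrable setT (fun w => (Hi i w * Hi j w)%:E).
Proof.
apply: (bnd_int (K := K * K)); [exact: prob_fin|exact: measurable_funM|].
by move=> w; rewrite normrM; apply: ler_pM => //; exact: hK.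
Qed.

Lemma var_bound :
  \int[P]_w ((\sum_(i < n) Hi i w) ^+ 2)%:E <= (n%:R * (K * K))%:E.
Proof.
have E w : ((\sum_(i < n) Hi i w) ^+ 2)%:E =
    \sum_(i < n) \sum_(j < n) (Hi i w * Hi j w)%:E.
  rewrite expr2 mulr_suml -sumEFin; apply: eq_bigr => i _.
  by rewrite mulr_sumr -sumEFin.
rewrite (eq_integral (fun w => \sum_(i < n) \sum_(j < n) (Hi i w * Hi j w)%:E)); last first.
  by move=> w _; exact: E.
rewrite integral_sum //; last first.
  by move=> i; apply: integrable_sum => // j _; exact: iHij.
apply: (@le_trans _ _ (\sum_(i < n) (K * K)%:E)); last first.
  by rewrite sumEFin sumr_const card_ord mulr_natl.
apply: lee_sum => i _.
rewrite integral_sum //.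
rewrite (bigD1 i) //= big1 ?adde0; last first.
  move=> j ji.
  apply: (cross0 (PX := PX) mD (mX i) (mX j) _ mH hK h0).
  move=> A B C mA mB mC; apply: IND2 => //.
  by move=> h; move/eqP: ji; apply; exact: ord_inj (esym h).
apply: (@le_trans _ _ (\int[P]_w (cst (K * K)%R w)%:E)).
  apply: le_integral => //.
    apply: (bnd_int (K := `|K * K|%R)); [exact: prob_fin|exact: measurable_cst|by []].
  move=> x _; rewrite lee_fin /=.
  apply: le_trans (ler_norm _) _; rewrite normrM.
  by apply: ler_pM => //; exact: hK.
rewrite (_ : (fun w => (cst (K * K)%R w)%:E) = cst (K * K)%:E) //.
rewrite integral_cst //.
apply: (@le_trans _ _ ((K * K)%:E * 1)); last by rewrite mule1.
apply: lee_pmul => //; first by rewrite lee_fin -expr2 sqr_ge0.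
exact: probability_le1.
Qed.
End var.
Section cheb.
Local Open Scope ereal_scope.
Context (R : realType) (dO : measure_display) (Omega : measurableType dO).
Variables (P : probability Omega R) (Y : Omega -> R) (V t : R).
Hypotheses (mY : measurable_fun setT Y) (t0 : (0 < t)%R)
  (hV : \int[P]_w ((Y w) ^+ 2)%:E <= V%:E).

Lemma cheb_meas : measurable [set w | (t <= `|Y w|)%R].
Proof.
have -> : [set w | (t <= `|Y w|)%R] = (fun w => `|Y w|%R) @^-1` `[t, +oo[%classic.
  by apply/seteqP; split => w /=; rewrite in_itv /= andbT.
have mN : measurable_fun setT (fun w => `|Y w|%R) by apply: measurableT_comp => //.
rewrite -[X in measurable X]setTI; exact: mN measurableT _ (measurable_itv _).
Qed.

Lemma cheb : (t ^+ 2)%:E * P [set w | (t <= `|Y w|)%R] <= V%:E.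
Proof.
set A := [set w | _].
have mA : measurable A := cheb_meas.
have mY2 : measurable_fun setT (fun w => ((Y w) ^+ 2)%:E).
  by apply/measurable_EFinP; apply: (measurableT_comp (exprn_measurable _) mY).
rewrite -integral_cst //.
apply: le_trans hV.
apply: (@le_trans _ _ (\int[P]_(w in A) ((Y w) ^+ 2)%:E)).
  apply: ge0_le_integral => //.
  - by move=> w _; rewrite lee_fin ltW // exprn_gt0.
  - exact: measurable_funTS.
  - move=> w Aw; rewrite lee_fin /=.
    have t0' : (0 <= t)%R by exact: ltW.
    by rewrite -[(Y w ^+ 2)%R]real_normK ?num_real // ler_sqr ?nnegrE.
apply: (ge0_subset_integral P mA measurableT mY2) => //.
by move=> w _; rewrite lee_fin sqr_ge0.
Qed.

End cheb.
Section pern.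
Context (R : realType) (dT : measure_display) (T : measurableType dT)
  (dS : measure_display) (S : measurableType dS).
Variables (PX : probability T R) (p : nat) (mu : T -> 'rV[R]_p)
  (mh : S -> T -> 'rV[R]_p) (C : {fset 'rV[R]_p}) (B : R).
Hypotheses (mmu : forall a : 'I_p, measurable_fun setT (fun x => mu x 0 a))
  (mmh : forall a : 'I_p, measurable_fun setT (fun z : S * T => mh z.1 z.2 0 a))
  (hmuB : forall (a : 'I_p) x, `|mu x 0 a| <= B)
  (hC : forall c, c \in C -> forall a : 'I_p, `|c 0 a| <= B).

Definition KK : R := 4 * B ^+ 2 * p%:R.
Definition Gf (z : S * T) : R := dmin C (mh z.1 z.2).
Definition Gt (z : S * T) : R := Num.min (Gf z) KK.
Definition Gbar (s : S) : R := Rintegral PX setT (fun y => Gt (s, y)).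
Definition Hf (z : S * T) : R := Gt z - Gbar z.1.
Definition Ff (x : T) : R := dmin C (mu x).
Definition good (s : S) := forall (a : 'I_p) x, `|mh s x 0 a| <= B.

Lemma KK_ge0 : 0 <= KK.
Proof. by rewrite /KK; apply: mulr_ge0 => //; apply: mulr_ge0 => //; exact: sqr_ge0. Qed.

Lemma mGf : measurable_fun setT Gf.
Proof. exact: (meas_dmin (g := fun z : S * T => mh z.1 z.2)). Qed.

Lemma mGt : measurable_fun setT Gt.
Proof. exact: measurable_minr mGf (measurable_cst _). Qed.

Lemma mFf : measurable_fun setT Ff.
Proof. exact: meas_dmin. Qed.

Lemma Gf_ge0 z : 0 <= Gf z.
Proof. by rewrite /Gf -dminE sqn_ge0. Qed.

Lemma Gt_ge0 z : 0 <= Gt z.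
Proof. by rewrite /Gt le_min Gf_ge0 KK_ge0. Qed.

Lemma Gt_le z : Gt z <= KK.
Proof. by rewrite /Gt ge_min lexx orbT. Qed.

Lemma Gt_norm z : `|Gt z| <= KK.
Proof. by rewrite ger0_norm ?Gt_ge0 ?Gt_le. Qed.

Lemma mGts s : measurable_fun setT (fun y => Gt (s, y)).
Proof. exact: measurable_fun_pair2 mGt. Qed.

Lemma iGts s : PX.-integrable setT (EFin \o (fun y => Gt (s, y))).
Proof. apply: (bnd_int (K := KK)); [exact: prob_fin|exact: mGts|exact: (fun y => Gt_norm _)]. Qed.

Lemma Gbar_ge0 s : 0 <= Gbar s.
Proof. by apply: Rintegral_ge0 => y _; exact: Gt_ge0. Qed.

Lemma Gbar_le s : Gbar s <= KK.
Proof.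
apply: (@le_trans _ _ (Rintegral PX setT (fun=> KK))).
  apply: le_Rintegral => //; [exact: iGts| |by move=> y _; exact: Gt_le].
  apply: (bnd_int (K := `|KK|)); [exact: prob_fin|exact: measurable_cst|by []].
rewrite Rintegral_cst // prob1 /= mulr1 //.
Qed.

Lemma mGbar : measurable_fun setT Gbar.
Proof.
have m1 := (@measurable_fun_fubini_tonelli_F _ _ S T R PX (EFin \o Gt)).
have : measurable_fun setT (fubini_F PX (EFin \o Gt)).
  apply: m1; first by apply/measurable_EFinP; exact: mGt.
  by move=> z; rewrite /= lee_fin Gt_ge0.
move=> h; apply: (measurableT_comp (fine_measurable measurableT) h).
Qed.

Lemma mHf : measurable_fun setT Hf.
Proof.
apply: measurable_funB; first exact: mGt.
exact: measurableT_comp mGbar measurable_fst.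
Qed.

Lemma Hf_norm z : `|Hf z| <= KK.
Proof.
rewrite /Hf; have := Gt_ge0 z; have := Gt_le z; have := Gbar_ge0 z.1;
  have := Gbar_le z.1.
move=> h1 h2 h3 h4; rewrite ler_norml; apply/andP; split; lra.
Qed.

Lemma Hf_int0 s : (\int[PX]_y (Hf (s, y))%:E = 0)%E.
Proof.
rewrite /Hf /=.
have -> : (fun y => ((Gt (s, y) - Gbar s)%:E)) = (fun y => (Gt (s, y))%:E - (Gbar s)%:E)%E.
  by apply/funext => y.
rewrite integralB_EFin //; last 2 first.
- exact: iGts.
- apply: (bnd_int (K := `|Gbar s|)); [exact: prob_fin|exact: measurable_cst|by []].
have -> : (\int[PX]_x (Gt (s, x))%:E)%E = (Gbar s)%:E.
  rewrite /Gbar /Rintegral fineK //; exact: integrable_fin_num (iGts s).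
rewrite integral_cst // prob1 mule1 subee //.
Qed.


Lemma Rint_sum (I : Type) (s : seq I) (f : I -> T -> R) :
  (forall i, PX.-integrable setT (EFin \o f i)) ->
  Rintegral PX setT (fun x => \sum_(i <- s) f i x) =
  \sum_(i <- s) Rintegral PX setT (f i).
Proof.
move=> hf; elim: s => [|i s IH].
  rewrite big_nil; under eq_Rintegral do rewrite big_nil.
  by rewrite Rintegral_cst // mul0r.
rewrite big_cons -IH.
under eq_Rintegral do rewrite big_cons.
rewrite RintegralD //.
have -> : (EFin \o (fun x => \sum_(j <- s) f j x)) = (fun x => \sum_(j <- s) (f j x)%:E)%E.
  by apply/funext => x /=; rewrite sumEFin.
by apply: integrable_sum => // j _; exact: hf.
Qed.

Lemma good_eq s y : good s ->
  Gt (s, y) = sqn (mh s y - proj_codebook C (mh s y)).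
Proof.
move=> gs; rewrite /Gt /Gf /= -dminE.
apply/min_idPl; apply: proj_bound hC _ => a; exact: gs.
Qed.

Lemma Ff_eq x : Ff x = sqn (mu x - proj_codebook C (mu x)).
Proof. by rewrite /Ff dminE. Qed.

Lemma Gbar_risk s : good s ->
  `|Gbar s - risk PX mu C| <=
    4 * `|B| * \sum_(a < p) L1norm PX (fun x => mh s x 0 a - mu x 0 a).
Proof.
move=> gs.
have mGfs : measurable_fun setT (fun y => Gt (s, y)) := mGts s.
have bF x : `|Ff x| <= KK.
  rewrite Ff_eq ger0_norm ?sqn_ge0 //; apply: proj_bound hC _ => a; exact: hmuB.
have iF : PX.-integrable setT (EFin \o Ff).
  by apply: (bnd_int (K := KK)); [exact: prob_fin|exact: mFf|exact: bF].
have -> : risk PX mu C = Rintegral PX setT Ff.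
  transitivity (Rintegral PX setT (fun x => sqn (mu x - proj_codebook C (mu x)))); first by [].
  by apply: eq_Rintegral => x _; rewrite /= -Ff_eq.
rewrite /Gbar -RintegralB //; last exact: iGts.
have md a : measurable_fun setT (fun x => mh s x 0 a - mu x 0 a).
  apply: measurable_funB (mmu a).
  exact: (measurable_fun_pair2 (f := fun z : S * T => mh z.1 z.2 0 a)).
have id a : PX.-integrable setT (EFin \o (fun x => `|mh s x 0 a - mu x 0 a|)).
  apply: (bnd_int (K := B + B)); [exact: prob_fin| exact: measurableT_comp (md a)|].
  move=> x; rewrite normr_id; apply: le_trans (ler_normB _ _) _.
  exact: lerD (gs a x) (hmuB a x).
have mdiff : measurable_fun setT (fun x => Gt (s, x) - Ff x).
  exact: measurable_funB mGfs mFf.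
apply: le_trans (le_normr_Rintegral _ _) _ => //.
  apply: (bnd_int (K := KK + KK)); [exact: prob_fin|exact: mdiff|].
  move=> x; apply: le_trans (ler_normB _ _) _; exact: lerD (Gt_norm _) (bF x).
have L a : L1norm PX (fun x => mh s x 0 a - mu x 0 a) =
   Rintegral PX setT (fun x => `|mh s x 0 a - mu x 0 a|) by [].
rewrite mulr_sumr.
under eq_bigr => a _ do rewrite L -(RintegralZl (4 * `|B|) measurableT (id a)).
rewrite -Rint_sum //; last first.
  move=> a; have -> : EFin \o (fun x => 4 * `|B| * `|mh s x 0 a - mu x 0 a|) =
     (fun x => ((4 * `|B|)%:E * (EFin \o (fun x => (`|mh s x 0 a - mu x 0 a|)%R)) x)%E).
    by apply/funext => x.
  exact: (integrableZl measurableT).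
apply: le_Rintegral => //.
- apply: (bnd_int (K := KK + KK)); [exact: prob_fin|exact: measurableT_comp mdiff|].
  move=> x; rewrite normr_id; apply: le_trans (ler_normB _ _) _; exact: lerD (Gt_norm _) (bF x).
- have -> : EFin \o (fun x => \sum_(a < p) 4 * `|B| * `|mh s x 0 a - mu x 0 a|) =
     (fun x => \sum_(a < p) (4 * `|B| * `|mh s x 0 a - mu x 0 a|)%:E)%E.
    by apply/funext => x /=; rewrite sumEFin.
  apply: integrable_sum => // a _.
  have -> : (fun x => (4 * `|B| * `|mh s x 0 a - mu x 0 a|)%:E) =
     (fun x => ((4 * `|B|)%:E * (EFin \o (fun x => (`|mh s x 0 a - mu x 0 a|)%R)) x)%E).
    by apply/funext => x.
  exact: (integrableZl measurableT).
move=> x _ /=; rewrite good_eq // -dminE.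
apply: le_trans (proj_lip hC (fun a => gs a x) (fun a => hmuB a x)) _.
rewrite -mulr_sumr ler_wpM2r //; first by apply: sumr_ge0 => a _.
by rewrite ler_wpM2l // ler_norm.
Qed.

End pern.
Section misc.
Variable R : realType.

Lemma bigmax_ge (p : nat) (f : 'I_p -> R) :
  0 <= \big[Num.max/0]_(a < p) f a /\ forall a, f a <= \big[Num.max/0]_(a < p) f a.
Proof.
have H (s : seq 'I_p) : 0 <= \big[Num.max/0]_(a <- s) f a /\
   forall a, a \in s -> f a <= \big[Num.max/0]_(a <- s) f a.
  elim: s => [|b s [IH1 IH2]]; first by rewrite big_nil.
  rewrite big_cons; split; first by rewrite le_max IH1 orbT.
  move=> a; rewrite inE => /orP[/eqP->|as_]; first by rewrite le_max lexx.
  by rewrite le_max IH2 ?orbT.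
have [H1 H2] := H (index_enum 'I_p); split; first exact: H1.
by move=> a; apply: H2; rewrite mem_index_enum.
Qed.

Context (dO : measure_display) (Omega : measurableType dO)
  (dT : measure_display) (T : measurableType dT)
  (dS : measure_display) (S : measurableType dS).

Lemma ind_pair (P : probability Omega R) (PX : probability T R) (D : Omega -> S)
  (X : nat -> Omega -> T) (n : nat) :
  indep_sample P PX D X n ->
  forall i j, (i < n)%N -> (j < n)%N -> i <> j ->
  forall A B C, measurable A -> measurable B -> measurable C ->
  (P (D @^-1` A `&` X i @^-1` B `&` X j @^-1` C) = P (D @^-1` A) * PX B * PX C)%E.
Proof.
move=> ind i j hi hj ij A B C mA mB mC.
pose Af k := if k == i then B else if k == j then C else setT.
have mAf k : measurable (Af k).
  by rewrite /Af; case: ifP => // _; case: ifP.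
have := ind A Af mA mAf.
have E1 : \bigcap_(k in `I_n) X k @^-1` Af k = X i @^-1` B `&` X j @^-1` C.
  apply/seteqP; split => w.
    move=> h; split.
      by have := h i hi; rewrite /Af eqxx.
    have ji : (j == i) = false by apply/eqP => e; apply: ij; rewrite e.
    by have := h j hj; rewrite /Af ji eqxx.
  move=> [wB wC] k /= hk; rewrite /Af; case: eqP => [->//|_]; case: eqP => [->//|_] //.
have E2 : (\prod_(k < n) PX (Af k) = PX B * PX C)%E.
  rewrite (bigD1 (Ordinal hi)) //= (bigD1 (Ordinal hj)) //=; last first.
    by apply/eqP => /(congr1 val) /= /esym.
  rewrite big1 ?mule1; last first.
    move=> k /andP[ki kj]; rewrite /Af.
    have -> : (k == i :> nat) = false by apply/negbTE; apply: contra ki => /eqP h; apply/eqP/val_inj.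
    have -> : (k == j :> nat) = false by apply/negbTE; apply: contra kj => /eqP h; apply/eqP/val_inj.
    exact: prob1.
  have ji : (j == i) = false by apply/eqP => e; apply: ij; rewrite e.
  by rewrite /Af eqxx ji eqxx.
by rewrite E1 E2 setIA muleA.
Qed.

End misc.
Theorem lemmaA4
  (R : realType)
  (dO : measure_display) (Omega : measurableType dO) (P : probability Omega R)
  (dT : measure_display) (T : measurableType dT) (PX : probability T R)
  (dS : measure_display) (S : measurableType dS)
  (p k : nat) (mu : T -> 'rV[R]_p)
  (X : nat -> Omega -> T) (D : nat -> Omega -> S)
  (muhat : nat -> S -> T -> 'rV[R]_p)
  (kappa alpha B : R) (Cstar : {fset 'rV[R]_p}) :
  (* covariates and auxiliary samples are random elements *)
  (forall i, measurable_fun [set: Omega] (X i)) ->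
  (forall n, measurable_fun [set: Omega] (D n)) ->
  (* regression functions and the estimator are measurable *)
  (forall a : 'I_p, measurable_fun [set: T] (fun x => mu x 0 a)) ->
  (forall n (a : 'I_p),
     measurable_fun [set: S * T] (fun sx : S * T => muhat n sx.1 sx.2 0 a)) ->
  (* X_0, ..., X_{n-1} iid ~ PX, independent of the sample D n defining muhat *)
  (forall n, indep_sample P PX (D n) X n) ->
  (* margin condition *)
  0 < kappa -> 0 < alpha -> margin_condition PX mu k kappa alpha ->
  (* boundedness *)
  (forall (a : 'I_p) x, `|mu x 0 a| <= B) ->
  (forall n, almost_everywhere P
     [set w | forall (a : 'I_p) x, `|muhat n (D n w) x 0 a| <= B]) ->
  (* max_a || muhat_a - mu_a ||_oo = o_P(1) *)
  littleoP1 P (fun n w =>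
    \big[Num.max/0]_(a < p) supnorm (fun x => muhat n (D n w) x 0 a - mu x 0 a)) ->
  optimal PX mu k Cstar ->
  bigO_in_prob P
    (fun n w =>
       (n%:R)^-1 * \sum_(i < n)
          sqn (muhat n (D n w) (X i w) - proj_codebook Cstar (muhat n (D n w) (X i w)))
       - risk PX mu Cstar)
    (fun n w =>
       (Num.sqrt n%:R)^-1
       + \big[Num.max/0]_(a < p)
           L1norm PX (fun x => muhat n (D n w) x 0 a - mu x 0 a)
       + (\big[Num.max/0]_(a < p)
           supnorm (fun x => muhat n (D n w) x 0 a - mu x 0 a)) `^ (alpha + 1)
       + kappa^-1 * \big[Num.max/0]_(a < p)
           (supnorm (fun x => muhat n (D n w) x 0 a - mu x 0 a)
            * L1norm PX (fun x => muhat n (D n w) x 0 a - mu x 0 a))).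
Proof.
move=> mX mD mmu mmh ind kap0 alp0 _ hmuB hmhB _ opt.
have hC : forall c, c \in Cstar -> forall a : 'I_p, `|c 0 a| <= B.
  by move=> c cC a; have [x <-] := opt.1.2 c cC; exact: hmuB.
set K := KK p B.
have K0 : 0 <= K := KK_ge0 p B.
move=> eps eps0.
have ie0 : 0 < eps^-1 by rewrite invr_gt0.
set M1 := (K + 1) * (1 + eps^-1).
have M10 : 0 < M1 by apply: mulr_gt0; lra.
set Q := 4 * `|B| * p%:R.
have Q0 : 0 <= Q by apply: mulr_ge0 => //; apply: mulr_ge0.
exists (M1 + Q + 1); split; first lra.
exists 1%N => n n1.
have n0 : (0 < n%:R :> R) by rewrite ltr0n.
set mh := muhat n.
have mmhn := mmh n.
case: (hmhB n) => N [mN PN0 NN].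
set H := Hf PX mh Cstar B.
have mH : measurable_fun setT H := mHf PX Cstar B mmhn.
have hK : forall z, `|H z| <= K := Hf_norm PX Cstar B mmhn.
have h0 : forall s, (\int[PX]_y (H (s, y))%:E = 0)%E := Hf_int0 PX Cstar B mmhn.
set Y := fun w => \sum_(i < n) H (D n w, X i w).
have mY : measurable_fun setT Y.
  apply: measurable_sum => i; apply: measurableT_comp mH _.
  exact: measurable_fun_pair.
have VB := var_bound (mD n) mX (ind_pair (ind n)) mH hK h0.
set t := M1 * Num.sqrt n%:R.
have sn0 : 0 < Num.sqrt (n%:R : R) by rewrite sqrtr_gt0.
have t0 : 0 < t by apply: mulr_gt0.
have CB := cheb mY t0 VB.
set E := [set w | t <= `|Y w|].
have mE : measurable E := cheb_meas t mY.
have PB : (P E <= eps%:E)%E.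
  have fq : P E = (fine (P E))%:E by rewrite fineK // fin_num_measure.
  move: CB; rewrite fq -EFinM lee_fin => CB.
  rewrite lee_fin.
  have tt : t ^+ 2 = M1 ^+ 2 * n%:R by rewrite exprMn sqr_sqrtr // ler0n.
  have q0 : 0 <= fine (P E) by apply: fine_ge0.
  have kk : K * K <= eps * M1 ^+ 2.
    rewrite /M1 exprMn.
    have e1 : eps * eps^-1 = 1 by rewrite mulfV // gt_eqF.
    have h1 : eps^-1 <= (1 + eps^-1) ^+ 2 by rewrite expr2; nra.
    have h2 : K * K <= (K + 1) ^+ 2 by rewrite expr2; nra.
    have h3 : (K + 1) ^+ 2 * eps^-1 * eps <= (K + 1) ^+ 2 * (1 + eps^-1) ^+ 2 * eps.
      apply: ler_wpM2r; first exact: ltW.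
      by apply: ler_wpM2l => //; exact: sqr_ge0.
    rewrite -mulrA [eps^-1 * eps]mulrC e1 mulr1 in h3.
    lra.
  have key : n%:R * (K * K) <= eps * t ^+ 2.
    rewrite tt; have := ler_wpM2r (ltW n0) kk; lra.
  have t20 : 0 < t ^+ 2 by apply: exprn_gt0.
  have : t ^+ 2 * fine (P E) <= t ^+ 2 * eps by lra.
  by rewrite ler_pM2l.
set A := ~` N `&` ~` E.
have mA : measurable A by apply: measurableI; apply: measurableC.
exists A; split; first exact: mA.
split.
  have cA : ~` A = N `|` E by rewrite setCI !setCK.
  have hcA : (P (~` A) <= eps%:E)%E.
    rewrite cA; apply: le_trans (measureU2 _ mN mE) _.
    rewrite -[X in (_ <= X)%E]add0e; apply: leeD; last exact: PB.
    by rewrite le_eqVlt; apply/orP; left; apply/eqP; exact: PN0.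
  have -> : P A = (1 - P (~` A))%E.
    by have h := probability_setC P (measurableC mA); rewrite setCK in h; exact h.
  have fA : P (~` A) = (fine (P (~` A)))%:E.
    by rewrite fineK //; apply: fin_num_measure; exact: measurableC.
  move: hcA; rewrite fA lee_fin => hcA.
  by rewrite -EFinB lee_fin; lra.
move=> w [nNw nEw] /=.
have gs : good mh B (D n w).
  by apply: contrapT => ng; apply: nNw; exact: NN _ ng.
have Yt : `|Y w| < t by rewrite ltNge; apply/negP => h; apply: nEw.
set G0 := Gbar PX mh Cstar B (D n w).
have Esum : \sum_(i < n) sqn (mh (D n w) (X i w) - proj_codebook Cstar (mh (D n w) (X i w)))
    = Y w + n%:R * G0.
  have e i : sqn (mh (D n w) (X i w) - proj_codebook Cstar (mh (D n w) (X i w)))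
      = H (D n w, X i w) + G0.
    by rewrite -(good_eq hC (X i w) gs) /H /Hf /= subrK.
  under eq_bigr do rewrite e.
  by rewrite big_split /= sumr_const card_ord mulr_natl.
rewrite Esum.
have GR := Gbar_risk PX mmu mmhn hmuB hC gs.
rewrite -/G0 in GR.
set mL := \big[Num.max/0]_(a < p) L1norm PX (fun x => mh (D n w) x 0 a - mu x 0 a).
have [mL0 mLa] := bigmax_ge (fun a => L1norm PX (fun x => mh (D n w) x 0 a - mu x 0 a)).
rewrite -/mL in mL0 mLa.
have SL : \sum_(a < p) L1norm PX (fun x => mh (D n w) x 0 a - mu x 0 a) <= p%:R * mL.
  apply: (@le_trans _ _ (\sum_(a < p) mL)); first by apply: ler_sum => a _; exact: mLa.
  by rewrite sumr_const card_ord mulr_natl.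
have GR2 : `|G0 - risk PX mu Cstar| <= Q * mL.
  apply: le_trans GR _.
  apply: (@le_trans _ _ (4 * `|B| * (p%:R * mL))).
    by apply: ler_wpM2l => //; apply: mulr_ge0.
  by rewrite /Q mulrA.
set r3 := _ `^ _.
have r30 : 0 <= r3 by apply: powR_ge0.
set r4 := kappa^-1 * _.
have r40 : 0 <= r4.
  apply: mulr_ge0; first by rewrite invr_ge0 ltW.
  exact: (bigmax_ge _).1.
set a := (Num.sqrt n%:R)^-1.
have a0 : 0 < a by rewrite invr_gt0.
have Ya : `|n%:R^-1 * Y w| <= M1 * a.
  rewrite normrM ger0_norm ?invr_ge0 ?ler0n //.
  have -> : M1 * a = n%:R^-1 * t.
    rewrite /t /a; set sq := Num.sqrt (n%:R : R).
    have -> : (n%:R : R) = sq * sq by rewrite /sq -expr2 sqr_sqrtr // ler0n.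
    by field; rewrite gt_eqF.
  by rewrite ler_wpM2l ?invr_ge0 ?ler0n // ltW.
have -> : n%:R^-1 * (Y w + n%:R * G0) - risk PX mu Cstar =
    n%:R^-1 * Y w + (G0 - risk PX mu Cstar).
  by rewrite mulrDr mulrA mulVf ?gt_eqF // mul1r addrA.
apply: le_trans (ler_normD _ _) _.
have h5 : M1 * a <= (M1 + Q + 1) * a by rewrite ler_wpM2r ?ltW //; lra.
have h6 : Q * mL <= (M1 + Q + 1) * mL by rewrite ler_wpM2r //; lra.
have h7 : 0 <= (M1 + Q + 1) * r3 by apply: mulr_ge0 => //; lra.
have h8 : 0 <= (M1 + Q + 1) * r4 by apply: mulr_ge0 => //; lra.
rewrite !mulrDr; lra.
Qed.
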